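(* Let $C\subseteq\{0,1\}^m$ be a code, let $C'\subseteq C$ with $\mathrm{CL}(C')=\ell$, and let $T=\mathrm{Supp}(C')$. Then $\mathrm{CL}(C|_{\bar T})\le \mathrm{CL}(C)-\ell$.
   Context: For $S\subseteq[m]$, $C|_S=\{c|_S : c\in C\}\subseteq\{0,1\}^S$, and $\bar T=[m]\setminus T$. $\mathrm{Supp}(C')=\{i\in[m] : \exists c\in C',\ c_i\neq 0\}$. A chain of length $\ell$ in a code $D\subseteq\{0,1\}^A$ is a pair of injective maps $a:[\ell]\to A$ and $c:[\ell]\to D$ such that $c(i)_{a(i)}=1$ for all $i$, and $c(i)_{a(j)}=0$ for all $1\le i<j\le\ell$; the chain length $\mathrm{CL}(D)$ is the maximum length of a chain in $D$ ($0$ if none exists). *)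

(* Defs.v *)
From mathcomp Require Import all_boot.
Set Implicit Arguments. Unset Strict Implicit. Unset Printing Implicit Defensive.

Definition restrict (I : finType) (S : {set I}) (C : {set {ffun I -> bool}})
  : {set {ffun {x : I | x \in S} -> bool}} :=
  [set [ffun x : {x : I | x \in S} => c (val x)] | c : {ffun I -> bool} in C].

Definition Supp (I : finType) (C' : {set {ffun I -> bool}}) : {set I} :=
  [set i | [exists c in C', c i]].

Definition has_chain (A : finType) (D : {set {ffun A -> bool}}) (l : nat) : bool :=
  [exists a : {ffun 'I_l -> A}, exists c : {ffun 'I_l -> {ffun A -> bool}},
     [&& injectiveb a, injectiveb c,
         [forall i : 'I_l, c i \in D],
         [forall i : 'I_l, c i (a i)] &
         [forall i : 'I_l, forall j : 'I_l, (i < j)%N ==> ~~ c i (a j)]]].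

(* Chain length: maximum length of a chain (lengths are bounded by #|A|
   since a is injective; the empty chain always exists). *)
Definition CL (A : finType) (D : {set {ffun A -> bool}}) : nat :=
  \max_(l < #|A|.+1 | has_chain D l) l.

(* Main.v *)
Require Import Defs.
From mathcomp Require Import all_boot.
Set Implicit Arguments. Unset Strict Implicit. Unset Printing Implicit Defensive.

Definition nchain (A : finType) (D : {set {ffun A -> bool}}) n
  (a : nat -> A) (c : nat -> {ffun A -> bool}) :=
  [/\ (forall i, i < n -> c i \in D), (forall i, i < n -> c i (a i)) &
      (forall i j, i < j -> j < n -> ~~ c i (a j))].

Lemma build (A : finType) (D : {set {ffun A -> bool}}) n a c :
  nchain D n a c -> has_chain D n.
Proof.
case=> H1 H2 H3; apply/existsP; exists [ffun i : 'I_n => a i].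
apply/existsP; exists [ffun i : 'I_n => c i].
apply/and5P; split.
- apply/injectiveP => i j; rewrite !ffunE => e; apply/val_inj.
  case: (ltngtP i j) => // h.
  + by move: (H3 _ _ h (ltn_ord j)); rewrite -e H2.
  + by move: (H3 _ _ h (ltn_ord i)); rewrite e H2.
- apply/injectiveP => i j; rewrite !ffunE => e; apply/val_inj.
  case: (ltngtP i j) => // h.
  + by move: (H3 _ _ h (ltn_ord j)); rewrite e H2.
  + by move: (H3 _ _ h (ltn_ord i)); rewrite -e H2.
- by apply/forallP => i; rewrite ffunE H1.
- by apply/forallP => i; rewrite !ffunE H2.
- apply/forallP => i; apply/forallP => j; apply/implyP => h.
  by rewrite !ffunE H3.
Qed.

Lemma extract (A : finType) (D : {set {ffun A -> bool}}) n (x0 : A) :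
  has_chain D n -> exists a c, nchain D n a c.
Proof.
case/existsP => fa /existsP [fc /and5P [_ _ /forallP H1 /forallP H2 /forallP H3]].
exists (fun i => if (insub i : option 'I_n) is Some o then fa o else x0).
exists (fun i => if (insub i : option 'I_n) is Some o then fc o else [ffun=> false]).
split.
- by move=> i hi; rewrite insubT.
- by move=> i hi; rewrite insubT.
- move=> i j hij hj; have hi := ltn_trans hij hj; rewrite !insubT.
  by move/forallP: (H3 (Ordinal hi)) => /(_ (Ordinal hj)) /implyP; apply.
Qed.

Lemma chain0 (A : finType) (D : {set {ffun A -> bool}}) : has_chain D 0.
Proof.
apply/existsP; exists (ffun0 (card_ord 0)); apply/existsP; exists (ffun0 (card_ord 0)).
apply/and5P; split; try (apply/injectiveP; by case); apply/forallP; by case.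
Qed.

Lemma CL_chain (A : finType) (D : {set {ffun A -> bool}}) : has_chain D (CL D).
Proof.
rewrite /CL (bigmax_eq_arg (ord0 : 'I_#|A|.+1)) ?chain0 //.
by case: arg_maxnP => //; apply: chain0.
Qed.

Lemma CL_ge (A : finType) (D : {set {ffun A -> bool}}) n : has_chain D n -> n <= CL D.
Proof.
move=> h; have hn : n < #|A|.+1.
  case/existsP: h => fa /existsP [fc /and5P [/injectiveP ia _ _ _ _]].
  by move: (leq_card _ ia); rewrite card_ord.
by rewrite /CL (@leq_bigmax_cond _ _ _ (Ordinal hn)).
Qed.

Theorem mainTheorem5 (m : nat) (C C' : {set {ffun 'I_m -> bool}}) (l : nat) :
  C' \subset C -> CL C' = l ->
  (CL (restrict (~: Supp C') C) <= CL C - l)%N.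
Proof.
move=> sub hl.
set k := CL (restrict (~: Supp C') C).
case: (posnP k) => [-> //|kpos].
have hk := CL_chain (restrict (~: Supp C') C); rewrite -/k in hk.
case/existsP: (hk) => fa _.
pose x0 := fa (Ordinal kpos).
have [a2 [c2 [H21 H22 H23]]] := extract x0 hk.
have [a1 [c1 [H11 H12 H13]]] := extract (val x0) (CL_chain C').
rewrite hl in H11 H12 H13.
pose d i := odflt [ffun=> false]
  [pick e in C | [ffun x : {x : 'I_m | x \in ~: Supp C'} => e (val x)] == c2 i].
have Hd : forall i, i < k -> d i \in C /\ forall x, d i (val x) = c2 i x.
  move=> i hi; rewrite /d; case: pickP => /=.
    move=> e /andP [eC /eqP <-]; split => // x; by rewrite ffunE.
  move: (H21 i hi) => /imsetP [e eC ->] /(_ e); by rewrite eC eqxx.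
have notS : forall i y, i < l -> ~~ c1 i (val (a2 y)).
  move=> i y hi; move: (valP (a2 y)); rewrite in_setC inE => /existsP hn.
  by apply/negP => h; apply: hn; exists (c1 i); rewrite h H11.
suff : l + k <= CL C by move=> h; rewrite leq_subRL // (leq_trans (leq_addr k l) h).
apply: CL_ge; apply: (@build _ _ _
  (fun t => if t < l then a1 t else val (a2 (t - l)))
  (fun t => if t < l then c1 t else d (t - l))); split.
- move=> t ht; case: ifP => h; first by apply: (subsetP sub); apply: H11.
  by case: (Hd (t - l)) => //; rewrite ltn_subLR // leqNgt h.
- move=> t ht; case: ifP => h; first exact: H12.
  have ht' : t - l < k by rewrite ltn_subLR // leqNgt h.
  by case: (Hd _ ht') => _ ->; apply: H22.
- move=> i j hij hj; case: (ltnP j l) => hjl.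
    by rewrite /= (ltn_trans hij hjl); apply: H13.
  rewrite /=; case: ifP => hil; first by apply: notS.
  have hil' : l <= i by rewrite leqNgt hil.
  have hi' : i - l < k by rewrite ltn_subLR // (ltn_trans hij hj).
  case: (Hd _ hi') => _ ->; apply: H23; last by rewrite ltn_subLR.
  by rewrite ltn_sub2rE // (leq_trans hil') // ltnW.
Qed.
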